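(* Let $D$ be a division ring, $A$ a finitely generated free abelian group and $D * A$ a crossed product. Let $N$ be a finitely generated critical $D * A$-module such that $\mathrm{gk}(N)\le \mathrm{gk}(L)$ for every nonzero finitely generated $D * A$-module $L$. Then $N$ is simple.
   Context: A crossed product $D * A$ of an abelian group $A$ over a division ring $D$ is a ring with a $D$-basis $\{\bar a: a\in A\}$ with $\bar a_1\bar a_2=\tau(a_1,a_2)\overline{a_1a_2}$ ($\tau(a_1,a_2)\in D\setminus\{0\}$) and $\bar a d=\sigma_a(d)\bar a$ for automorphisms $\sigma_a$ of $D$. $\mathrm{gk}$ denotes Gelfand–Kirillov dimension measured over $D$. A nonzero $D * A$-module $M$ is critical if for every nonzero proper submodule $N'$ of $M$ one has $\mathrm{gk}(M)>\mathrm{gk}(M/N')$. *)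

(* Defs.v *)
From HB Require Import structures.
From mathcomp Require Import all_boot all_order all_algebra.
From mathcomp Require Import all_classical all_reals ereal sequences exp.
Set Implicit Arguments. Unset Strict Implicit. Unset Printing Implicit Defensive.
Import Order.TTheory GRing.Theory Num.Theory.
Local Open Scope ring_scope.

(* The free abelian group of rank n is represented by 'rV[int]_n (additively). *)
Notation fgfree n := 'rV[int]_n.

Definition division_ring (D : unitRingType) : Prop :=
  forall x : D, x != 0 -> x \is a GRing.unit.

Definition ring_aut (D : unitRingType) (f : D -> D) : Prop :=
  [/\ forall x y, f (x + y) = f x + f y,
      forall x y, f (x * y) = f x * f y,
      f 1 = 1 & bijective f].

(* S (together with the embedding iota : D -> S and the elements u a = \bar a)
   is a crossed product D * A of A = Z^n over D. *)
Definition crossed_product (D : unitRingType) (S : nzRingType) (n : nat)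
    (iota : D -> S) (u : fgfree n -> S) : Prop :=
  [/\
      (forall s : S, exists (as_ : seq (fgfree n)) (cs : seq D),
          s = \sum_(i < size as_) iota cs`_i * u as_`_i),
      (forall (as_ : seq (fgfree n)) (cs : seq D), uniq as_ ->
          size cs = size as_ ->
          \sum_(i < size as_) iota cs`_i * u as_`_i = 0 -> all (eq_op^~ 0) cs),
      (exists tau : fgfree n -> fgfree n -> D,
          forall a b, tau a b != 0 /\ u a * u b = iota (tau a b) * u (a + b)) &
      (exists sigma : fgfree n -> D -> D,
          forall a, ring_aut (sigma a) /\
                    forall d, u a * iota d = iota (sigma a d) * u a)].

Section Modules.
Variables (S : nzRingType) (M : lmodType S).

Definition submodule (P : M -> Prop) : Prop :=
  [/\ P 0, (forall x y, P x -> P y -> P (x + y)) &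
      (forall (s : S) x, P x -> P (s *: x))].

Definition fin_gen : Prop :=
  exists X : seq M, forall m : M, exists c : 'I_(size X) -> S,
    m = \sum_(i < size X) c i *: X`_i.

Definition nonzero_mod : Prop := exists x : M, x != 0.

Definition simple_mod : Prop :=
  nonzero_mod /\
  forall P, submodule P -> (forall x, P x -> x = 0) \/ (forall x, P x).

Variables (D : unitRingType) (iota : D -> S).

(* k elements of T (selected by f) are left D-linearly independent modulo the
   submodule P, i.e. their images in M/P are D-linearly independent. *)
Definition indep_mod (P : M -> Prop) (T : seq M) (k : nat) : Prop :=
  exists f : 'I_k -> 'I_(size T), forall c : 'I_k -> D,
    P (\sum_(i < k) iota (c i) *: T`_(f i)) -> forall i, c i = 0.

(* dim_D of the left D-span of the image of T in M/P. *)
Definition dimD (P : M -> Prop) (T : seq M) : nat :=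
  \max_(k < (size T).+1 | `[< indep_mod P T k >]) k.

Variables (n : nat) (u : fgfree n -> S).

(* the box {a in Z^n : |a_i| <= k}; D-span of {u a | a in box k} is V^k,
   where V is the frame spanned by u a, a in {-1,0,1}^n. *)
Definition box (k : nat) : seq (fgfree n) :=
  [seq \row_i (((nat_of_ord (f i))%:Z) - k%:Z) | f : {ffun 'I_n -> 'I_(k.*2.+1)} <- enum {ffun 'I_n -> 'I_(k.*2.+1)}].

Definition frame_span (k : nat) (X : seq M) : seq M :=
  [seq u a *: x | a <- box k, x <- X].

Local Open Scope ereal_scope.

Definition gk_quot (R : realType) (P : M -> Prop) : \bar R :=
  ereal_sup (range (fun X : seq M =>
    limn_esup (fun k : nat =>
      ((ln ((dimD P (frame_span k X))%:R : R) / ln (k%:R : R))%R)%:E))).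

Definition gk (R : realType) : \bar R := gk_quot R (fun x => x = 0%R).

Definition critical (R : realType) : Prop :=
  nonzero_mod /\
  forall P, submodule P -> (exists x, P x /\ x != 0%R) -> (exists x, ~ P x) ->
    gk_quot R P < gk R.

End Modules.

(* Main.v *)
Require Import Defs.
From HB Require Import structures.
From mathcomp Require Import all_boot all_order all_algebra.
From mathcomp Require Import all_classical all_reals ereal sequences exp.
Set Implicit Arguments. Unset Strict Implicit. Unset Printing Implicit Defensive.
Import Order.TTheory GRing.Theory Num.Theory.
Local Open Scope ring_scope.

Section Quot.
Variables (S : nzRingType) (N : lmodType S) (P : N -> Prop).
Hypothesis hP : submodule P.

Lemma P0 : P 0. Proof. by case: hP. Qed.
Lemma PD x y : P x -> P y -> P (x + y). Proof. by case: hP => _ h _; apply: h. Qed.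
Lemma PZ s x : P x -> P (s *: x). Proof. by case: hP => _ _ h; apply: h. Qed.
Lemma PN x : P x -> P (- x). Proof. by move=> /(PZ (-1)); rewrite scaleN1r. Qed.
Lemma PB x y : P x -> P y -> P (x - y). Proof. by move=> ? ?; apply: PD => //; apply: PN. Qed.

Definition rel_of (x : N) : pred N := fun y => `[< P (x - y) >].
Lemma rel_ex x : exists y, rel_of x y.
Proof. by exists x; apply/asboolP; rewrite subrr; apply: P0. Qed.
Definition canon x : N := xchoose (rel_ex x).
Lemma canonP x : P (x - canon x).
Proof. exact/asboolP/(xchooseP (rel_ex x)). Qed.

Lemma canon_eq x y : P (x - y) -> canon x = canon y.
Proof.
move=> hxy; apply: eq_xchoose => z; rewrite /rel_of.
apply/asboolP/asboolP => h.
  have -> : y - z = (x - z) - (x - y) by rewrite opprB [RHS]addrC addrA subrK.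
  by apply: PB.
have -> : x - z = (x - y) + (y - z) by rewrite addrA subrK.
by apply: PD.
Qed.

Lemma canon_eqP x y : canon x = canon y -> P (x - y).
Proof.
move=> e; have := PB (canonP x) (canonP y); rewrite e.
by have -> : x - canon y - (y - canon y) = x - y by rewrite opprB addrA subrK.
Qed.

Lemma canon_idem x : canon (canon x) = canon x.
Proof. apply: canon_eq; have := PN (canonP x); by rewrite opprB. Qed.

Definition Q := {x : N | canon x == x}.
HB.instance Definition _ := Choice.on Q.

Definition pi (x : N) : Q := exist _ (canon x) (introT eqP (canon_idem x)).

Lemma piP x y : pi x = pi y <-> P (x - y).
Proof.
split; first by move=> /(congr1 val) /= /canon_eqP.
by move=> /canon_eq e; apply: val_inj.
Qed.

Lemma valK (a : Q) : pi (val a) = a.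
Proof. by apply: val_inj => /=; case: a => x /= /eqP. Qed.

Lemma pi_val x : P (val (pi x) - x).
Proof. by have := PN (canonP x); rewrite opprB. Qed.

Definition qzero : Q := pi 0.
Definition qadd (a b : Q) : Q := pi (val a + val b).
Definition qopp (a : Q) : Q := pi (- val a).
Definition qscale (s : S) (a : Q) : Q := pi (s *: val a).

Lemma qaddE x y : qadd (pi x) (pi y) = pi (x + y).
Proof.
apply/piP.
have -> : val (pi x) + val (pi y) - (x + y) = (val (pi x) - x) + (val (pi y) - y).
  by rewrite opprD addrACA.
by apply: PD; apply: pi_val.
Qed.
Lemma qoppE x : qopp (pi x) = pi (- x).
Proof. apply/piP; rewrite -opprD; apply: PN; exact: pi_val. Qed.
Lemma qscaleE s x : qscale s (pi x) = pi (s *: x).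
Proof. apply/piP; rewrite -scalerBr; apply: PZ; exact: pi_val. Qed.

Lemma qind (Pr : Q -> Prop) : (forall x, Pr (pi x)) -> forall a, Pr a.
Proof. by move=> h a; rewrite -(valK a). Qed.

Lemma qaddA : associative qadd.
Proof. by elim/qind=> x; elim/qind=> y; elim/qind=> z; rewrite !qaddE addrA. Qed.
Lemma qaddC : commutative qadd.
Proof. by elim/qind=> x; elim/qind=> y; rewrite !qaddE addrC. Qed.
Lemma qadd0 : left_id qzero qadd.
Proof. by elim/qind=> x; rewrite /qzero qaddE add0r. Qed.
Lemma qaddN : left_inverse qzero qopp qadd.
Proof. by elim/qind=> x; rewrite qoppE qaddE addNr. Qed.

HB.instance Definition _ := GRing.isZmodule.Build Q qaddA qaddC qadd0 qaddN.

Lemma qD x y : pi x + pi y = pi (x + y). Proof. exact: qaddE. Qed.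

Lemma qscaleA a b v : qscale a (qscale b v) = qscale (a * b) v.
Proof. by elim/qind: v => x; rewrite !qscaleE scalerA. Qed.
Lemma qscale1 : left_id 1 qscale.
Proof. by elim/qind=> x; rewrite qscaleE scale1r. Qed.
Lemma qscaleDr : right_distributive qscale +%R.
Proof.
move=> s; elim/qind=> x; elim/qind=> y.
by rewrite qD !qscaleE qD scalerDr.
Qed.
Lemma qscaleDl v : {morph qscale^~ v: a b / a + b}.
Proof. by elim/qind: v => x a b; rewrite !qscaleE qD scalerDl. Qed.

HB.instance Definition _ := GRing.Zmodule_isLmodule.Build S Q qscaleA qscale1 qscaleDr qscaleDl.

Definition QL : lmodType S := Q.

Lemma piD x y : pi x + pi y = pi (x + y) :> QL. Proof. exact: qaddE. Qed.
Lemma piZ s x : s *: pi x = pi (s *: x) :> QL. Proof. exact: qscaleE. Qed.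
Lemma pi0 : pi 0 = 0 :> QL. Proof. by []. Qed.
Lemma pi_eq0 x : pi x = 0 :> QL <-> P x.
Proof. by rewrite -pi0 piP subr0. Qed.
Lemma pi_sum I (r : seq I) (F : I -> N) : pi (\sum_(i <- r) F i) = \sum_(i <- r) (pi (F i) : QL).
Proof. by apply: (big_morph pi (fun x y => esym (piD x y)) pi0). Qed.


Variables (D : unitRingType) (iota : D -> S) (n : nat) (u : 'rV[int]_n -> S).

Lemma indep_pi (T : seq N) k :
  indep_mod iota (fun x : QL => x = 0) (map pi T : seq QL) k <-> indep_mod iota P T k.
Proof.
rewrite /indep_mod size_map.
have E : forall (f : 'I_k -> 'I_(size T)) (c : 'I_k -> D),
   \sum_(i < k) iota (c i) *: ((map pi T : seq QL)`_(f i)) =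
   pi (\sum_(i < k) iota (c i) *: T`_(f i)).
  move=> f c; rewrite pi_sum; apply: eq_bigr => i _.
  by rewrite (nth_map 0) // piZ.
split=> -[f hf]; exists f => c hc; apply: hf.
  by rewrite E; apply/pi_eq0.
by rewrite E in hc; apply/pi_eq0.
Qed.

Lemma dimD_pi (T : seq N) :
  dimD iota (fun x : QL => x = 0) (map pi T : seq QL) = dimD iota P T.
Proof.
rewrite /dimD size_map; apply: eq_bigl => k.
by apply/idP/idP => /asboolP h; apply/asboolP; apply/indep_pi.
Qed.

Lemma frame_pi k (X : seq QL) :
  frame_span u k X = map pi (frame_span u k (map val X)).
Proof.
rewrite /frame_span map_allpairs allpairs_mapr; apply: eq_allpairs => a x.
by rewrite -{1}(valK x) piZ.
Qed.

Lemma gk_QL (R : realType) : (gk QL iota u R <= gk_quot iota u R P)%E.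
Proof.
rewrite /gk /gk_quot; apply: ereal_sup_le => _ [X _ <-].
exists (map val X) => //; congr limn_esup; apply: funext => k.
by rewrite frame_pi dimD_pi.
Qed.

Lemma fin_gen_QL : fin_gen N -> fin_gen QL.
Proof.
move=> [X hX]; exists (map pi X : seq QL) => m.
have [c hc] := hX (val m).
rewrite size_map; exists c.
rewrite -(valK m) hc pi_sum; apply: eq_bigr => i _.
by rewrite (nth_map 0) // piZ.
Qed.

Lemma nonzero_QL : (exists x, ~ P x) -> nonzero_mod QL.
Proof.
move=> [x hx]; exists (pi x : QL); apply/eqP => /pi_eq0; exact: hx.
Qed.

End Quot.

Theorem proposition3p8 (R : realType) (D : unitRingType) (n : nat)
    (S : nzRingType) (iota : {rmorphism D -> S}) (u : 'rV[int]_n -> S)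
    (N : lmodType S) :
  division_ring D ->
  crossed_product iota u ->
  fin_gen N ->
  critical N iota u R ->
  (forall L : lmodType S, nonzero_mod L -> fin_gen L ->
     (gk N iota u R <= gk L iota u R)%E) ->
  simple_mod N.
Proof.
move=> _ _ fgN [nzN crit] hmin; split=> // P hP.
case: (pselect (forall x, P x -> x = 0)) => [h|h]; [by left|].
case: (pselect (forall x, P x)) => [h'|h']; [by right|].
exfalso.
have ex1 : exists x, P x /\ x != 0.
  apply: contra_notP h => nex x Px; apply/eqP/negPn/negP => nz; apply: nex; by exists x.
have ex2 : exists x, ~ P x.
  by apply: contra_notP h' => nex x; apply: contrapT => nPx; apply: nex; exists x.
have lt := crit P hP ex1 ex2.
have le1 := hmin (QL hP) (nonzero_QL hP ex2) (fin_gen_QL hP fgN).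
have le2 := gk_QL hP iota u R.
have := lt_le_trans lt (le_trans le1 le2).
by rewrite ltxx.
Qed.
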